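(* Let $d\ge3$ and let $G_0$ be the Green's function (with pole at $0$) of the free Laplacian on $\mathbb Z^d$. Then for every $x\in\mathbb Z^d$, $$\sum_{y\in\mathbb Z^d:\,|y-x|=1}|G_0(x)-G_0(y)|>0.$$
   Context: The free Laplacian on $\mathbb Z^d$ is $\Delta f(x)=\sum_{y:|y-x|=1}(f(x)-f(y))$ and its Green's function is $G_0(x)=\lim_{\alpha\downarrow0}((\Delta+\alpha)^{-1}1_0)(x)$, which is finite for $d\ge3$. *)

(* Defs.v *)
From HB Require Import structures.
From mathcomp Require Import all_boot all_order all_algebra.
From mathcomp Require Import all_classical all_reals all_analysis.
Set Implicit Arguments. Unset Strict Implicit. Unset Printing Implicit Defensive.
Import Order.TTheory GRing.Theory Num.Theory.
Local Open Scope ring_scope.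

Definition lattice (d : nat) := 'I_d -> int.

Definition lshift_pt (d : nat) (x : lattice d) (i : 'I_d) (s : int) : lattice d :=
  fun j => if j == i then x j + s else x j.

(* The neighbours y of x with |y - x| = 1 are exactly lshift_pt x i 1 and
   lshift_pt x i (-1), i < d.  Free Laplacian:
   (Delta f)(x) = sum_{|y-x|=1} (f x - f y). *)
Definition lap (R : realType) (d : nat) (f : lattice d -> R) (x : lattice d) : R :=
  \sum_(i < d) ((f x - f (lshift_pt x i 1)) + (f x - f (lshift_pt x i (-1)))).

Definition delta0 (R : realType) (d : nat) (x : lattice d) : R :=
  if [forall i, x i == 0] then 1 else 0.

(* g is the bounded solution of (Delta + a) g = 1_0, i.e. g = (Delta + a)^{-1} 1_0
   (for a > 0 this bounded solution is unique). *)
Definition is_resolvent0 (R : realType) (d : nat) (a : R) (g : lattice d -> R) : Prop :=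
  (exists M : R, forall x, `|g x| <= M) /\
  (forall x, lap g x + a * g x = delta0 R x).

(* Main.v *)
Require Import Defs.
From HB Require Import structures.
From mathcomp Require Import all_boot all_order all_algebra.
From mathcomp Require Import all_classical all_reals all_analysis.
From mathcomp Require Import zify ring lra.
Import Order.TTheory GRing.Theory Num.Theory.
Import numFieldNormedType.Exports.
Local Open Scope classical_set_scope.
Local Open Scope ring_scope.
Set Implicit Arguments. Unset Strict Implicit.

Definition sgnb (b : bool) : int := if b then 1 else -1.
Definition refl (d : nat) (i : 'I_d) (c : int) (b : bool) (z : lattice d) : lattice d :=
  fun j => if j == i then 2 * c + sgnb b - z j else z j.
Definition inD (d : nat) (i : 'I_d) (c : int) (b : bool) (z : lattice d) : Prop :=
  if b then z i <= c else c <= z i.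

Lemma refl_invol d (i : 'I_d) c b z : refl i c b (refl i c b z) = z.
Proof. apply: funext => j; rewrite /refl; case: eqP => // _; lia. Qed.

Lemma nbr_cases d (i : 'I_d) c b z j (t : int) : (t = 1 \/ t = -1) -> inD i c b z ->
  inD i c b (lshift_pt z j t) \/ lshift_pt z j t = refl i c b z.
Proof.
move=> ht; rewrite /inD /lshift_pt.
case: (eqVneq i j) => [<-|nij]; last by move=> h; left.
case: b => /= hz.
- case: (lerP (z i + t) c) => h; [by left|right].
  apply: funext => k; rewrite /refl /sgnb; case: eqP => [->|//]; lia.
- case: (lerP c (z i + t)) => h; [by left|right].
  apply: funext => k; rewrite /refl /sgnb; case: eqP => [->|//]; lia.
Qed.

Lemma notD_refl d (i : 'I_d) c b z : ~ inD i c b z -> inD i c b (refl i c b z).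
Proof.
rewrite /inD /refl eqxx /sgnb; case: b => h.
- have : c < z i by rewrite ltNge; apply/negP.
  lia.
- have : z i < c by rewrite ltNge; apply/negP.
  lia.
Qed.

Lemma lshift_refl d (i : 'I_d) c b z j t :
  refl i c b (lshift_pt z j t) = lshift_pt (refl i c b z) j (if j == i then -t else t).
Proof.
apply: funext => k; rewrite /refl /lshift_pt /=.
have [<- | njk] := eqVneq j k.
  by case: (j == i) => //; lia.
by [].
Qed.

Lemma lap_refl (R : realType) d (i : 'I_d) c b (g : lattice d -> R) z :
  lap (fun w => g (refl i c b w)) z = lap g (refl i c b z).
Proof.
rewrite /lap; apply: eq_bigr => j _; rewrite !lshift_refl.
case: (j == i); last by [].
by rewrite opprK addrC.
Qed.

Lemma lapB (R : realType) d (f g : lattice d -> R) z :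
  lap (fun w => f w - g w) z = lap f z - lap g z.
Proof. rewrite /lap -sumrB; apply: eq_bigr => j _; ring. Qed.

Lemma delta0_ge0 (R : realType) d (z : lattice d) : 0 <= delta0 R z.
Proof. by rewrite /delta0; case: ifP. Qed.

Lemma delta0_refl (R : realType) d (i : 'I_d) c b z : (if b then 0 <= c else c <= 0) ->
  inD i c b z -> delta0 R (refl i c b z) = 0.
Proof.
move=> hc hz; rewrite /delta0; case: forallP => // H; exfalso.
have := H i; rewrite /refl eqxx => /eqP; move: hc hz; rewrite /inD /sgnb; clear H; case: b => hc hz h; lia.
Qed.

Lemma mp (R : realType) d (i : 'I_d) c b (a M : R) (v : lattice d -> R) :
  0 < a -> (forall z, `|v z| <= M) -> (forall z, v (refl i c b z) = - v z) ->
  (forall z, inD i c b z -> 0 <= lap v z + a * v z) ->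
  forall z, inD i c b z -> 0 <= v z.
Proof.
move=> a0 hM hanti hL.
pose E := [set r | exists2 z, inD i c b z & v z = r].
have hlb : has_lbound E.
  exists (-M) => r [z _ <-]; by have := hM z; rewrite ler_norml => /andP[].
have hne : E !=set0.
  exists (v (fun _ => c)), (fun _ => c) => //; rewrite /inD; by case: ifP.
set m := inf E.
have hm : forall z, inD i c b z -> m <= v z.
  move=> z hz; apply: ge_inf => //; by exists z.
suff m0 : 0 <= m by move=> z hz; exact: le_trans m0 (hm z hz).
rewrite leNgt; apply/negP => m0.
set dR : R := d%:R.
have d0 : 0 <= dR by [].
have den0 : 0 < 2 * dR + a by lra.
set eps := - (a * m) / (2 * dR + a).
have eps0 : 0 < eps by rewrite /eps divr_gt0 // oppr_gt0 pmulr_rlt0.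
have epsm : eps <= - m.
  rewrite /eps ler_pdivrMr //; nra.
have [e [z hz <-] he] := inf_adherent eps0 (conj hne hlb).
have vz0 : v z < 0 by rewrite -/m in he; lra.
have hn : forall j t, (t = 1 \/ t = -1) -> m <= v (lshift_pt z j t).
  move=> j t ht; case: (nbr_cases j ht hz) => [h|->]; first exact: hm.
  rewrite hanti; lra.
have hl := hL z hz.
have hs : lap v z <= \sum_(j < d) ((v z - m) + (v z - m)).
  rewrite /lap; apply: ler_sum => j _.
  apply: lerD; rewrite lerD2l lerN2; apply: hn; by [left|right].
rewrite sumr_const card_ord -mulr_natr -/dR in hs.
have key : (2 * dR + a) * v z < 2 * dR * m.
  rewrite -/m in he; rewrite -(ltr_pM2l den0) in he.
  have -> : 2 * dR * m = (2 * dR + a) * (m + eps).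
    rewrite /eps; field; lra.
  exact: he.
nra.
Qed.

Lemma cvg_bigsum (R : realType) (T : Type) (F : set_system T) (FF : Filter F)
  (J : Type) (r : seq J) (f : J -> T -> R) (l : J -> R) :
  (forall j, f j x @[x --> F] --> l j) ->
  (\sum_(j <- r) f j x) @[x --> F] --> \sum_(j <- r) l j.
Proof.
move=> h; elim: r => [|j r ih].
  have -> : (fun x => \sum_(j <- [::]) f j x) = (fun _ => 0) by apply: funext => x; rewrite big_nil.
  rewrite big_nil; exact: cvg_cst.
have -> : (fun x => \sum_(j0 <- j :: r) f j0 x) = (fun x => f j x + \sum_(j0 <- r) f j0 x).
  by apply: funext => x; rewrite big_cons.
rewrite big_cons; exact: cvgD.
Qed.

Lemma lap_limit (R : realType) d (Ga : R -> lattice d -> R) (G0 : lattice d -> R) :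
  (forall a : R, 0 < a -> is_resolvent0 a (Ga a)) ->
  (forall x : lattice d, Ga a x @[a --> 0^'+] --> G0 x) ->
  forall z, lap G0 z = delta0 R z.
Proof.
move=> HGa HG z.
have H1 : (fun a => lap (Ga a) z + a * Ga a z) @ 0^'+ --> lap G0 z + 0 * G0 z.
  apply: cvgD.
    rewrite /lap; apply: cvg_bigsum => j.
    apply: cvgD; apply: cvgB; exact: HG.
  apply: cvgM; last exact: HG.
  exact: (cvg_at_right_filter (f := id) cvg_id).
have H2 : (fun a => lap (Ga a) z + a * Ga a z) @ 0^'+ --> delta0 R z.
  apply: cvg_trans (cvg_cst (delta0 R z)).
  apply: near_eq_cvg; apply: filterS (nbhs_right_gt 0) => a a0.
  by have [_ ->] := HGa a a0.
  by apply: filter_class.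
have := cvg_lim (@Rhausdorff R) H1; rewrite (cvg_lim (@Rhausdorff R) H2).
by rewrite mul0r addr0 => ->.
Qed.

Lemma refl_pos (R : realType) d (i : 'I_d) c b (Ga : R -> lattice d -> R) (G0 : lattice d -> R) :
  (if b then 0 <= c else c <= 0) ->
  (forall a : R, 0 < a -> is_resolvent0 a (Ga a)) ->
  (forall x : lattice d, Ga a x @[a --> 0^'+] --> G0 x) ->
  forall z, inD i c b z -> 0 <= G0 z - G0 (refl i c b z).
Proof.
move=> hc HGa HG z hz.
have Hcvg : (fun a => Ga a z - Ga a (refl i c b z)) @ 0^'+ --> G0 z - G0 (refl i c b z).
  by apply: cvgB; exact: HG.
rewrite -(cvg_lim (@Rhausdorff R) Hcvg).
apply: limr_ge; first exact: cvgP Hcvg.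
apply: filterS (nbhs_right_gt 0) => a a0.
have [[M hM] hres] := HGa a a0.
pose v := fun w => Ga a w - Ga a (refl i c b w).
apply: (@mp R d i c b a (M + M) v a0) => //.
- move=> w; rewrite /v; apply: le_trans (ler_normB _ _) _; exact: lerD.
- by move=> w; rewrite /v refl_invol opprB.
- move=> w hw; rewrite /v lapB lap_refl.
  have e1 := hres w; have e2 := hres (refl i c b w).
  rewrite (delta0_refl R hc hw) in e2.
  have -> : lap (Ga a) w = delta0 R w - a * Ga a w by rewrite -e1 addrK.
  have -> : lap (Ga a) (refl i c b w) = - (a * Ga a (refl i c b w)) by rewrite -[RHS]add0r -e2 addrK.
  have := delta0_ge0 R w; lra.
Qed.

Definition nrm d (z : lattice d) : nat := (\sum_(j < d) absz (z j))%N.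

Theorem mainTheorem17 (R : realType) (d : nat) (hd : (3 <= d)%N)
  (Ga : R -> lattice d -> R) (G0 : lattice d -> R) :
  (forall a : R, 0 < a -> is_resolvent0 a (Ga a)) ->
  (forall x : lattice d, Ga a x @[a --> 0^'+] --> G0 x) ->
  forall x : lattice d,
    0 < \sum_(i < d) (`|G0 x - G0 (lshift_pt x i 1)| + `|G0 x - G0 (lshift_pt x i (-1))|).
Proof.
move=> HGa HG x.
have d0 : (0 < d)%N by apply: leq_trans hd.
pose i : 'I_d := Ordinal d0.
pose c := x i. pose b := (0 <= c).
have hc : if b then 0 <= c else c <= 0 by rewrite /b; case: lerP => // h; exact: ltW.
have hxc : x i = c by [].
have hx : inD i c b x by rewrite /inD hxc; case: ifP => _; exact: lexx.
clearbody b c i.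
pose u z := G0 z - G0 (refl i c b z).
have hpos := refl_pos hc HGa HG.
have hlap := lap_limit HGa HG.
have hanti : forall z, u (refl i c b z) = - u z by move=> z; rewrite /u refl_invol opprB.
have hlapu : forall z, inD i c b z -> lap u z = delta0 R z.
  move=> z hz; by rewrite /u lapB (lap_refl i c b G0) !hlap delta0_refl ?subr0.
have hnb : forall z, inD i c b z -> u z = 0 -> forall j t, (t = 1 \/ t = -1) ->
    0 <= u (lshift_pt z j t).
  move=> z hz hu j t ht; case: (nbr_cases j ht hz) => [h|->]; first exact: hpos.
  by rewrite hanti hu oppr0.
have strong : forall n z, (nrm z < n)%N -> inD i c b z -> u z = 0 -> False.
  elim=> [//|n IH] z hn hz hu.
  have hl := hlapu z hz.
  have hsum : lap u z = - \sum_(j < d) (u (lshift_pt z j 1) + u (lshift_pt z j (-1))).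
    rewrite /lap -sumrN; apply: eq_bigr => j _; rewrite hu; ring.
  have hge : forall j, 0 <= u (lshift_pt z j 1) + u (lshift_pt z j (-1)).
    by move=> j; apply: addr_ge0; apply: hnb => //; [left|right].
  have s0 : 0 <= \sum_(j < d) (u (lshift_pt z j 1) + u (lshift_pt z j (-1))).
    by apply: sumr_ge0 => j _; exact: hge.
  move: hl; rewrite hsum /delta0; case: (boolP [forall k, z k == 0]) => [_|/forallPn [j hj]] e.
    by move: s0; rewrite -oppr_le0 e ler10.
  have hs0 : \sum_(j < d) (u (lshift_pt z j 1) + u (lshift_pt z j (-1))) = 0.
    by apply/eqP; rewrite -oppr_eq0 e.
  have := @psumr_eq0P R _ xpredT _ (fun j _ => hge j) hs0 j isT.
  move/eqP; rewrite paddr_eq0; last first.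
    - by apply: hnb => //; right.
    - by apply: hnb => //; left.
  move=> /andP[/eqP h1 /eqP h2].
  pose t : int := if 0 < z j then -1 else 1.
  pose y := lshift_pt z j t.
  apply: (IH y).
  - have : (nrm y < nrm z)%N.
      rewrite /nrm (bigD1 j) //= [X in (_ < X)%N](bigD1 j) //=.
      have -> : (\sum_(k < d | k != j) absz (y k) = \sum_(k < d | k != j) absz (z k))%N.
        by apply: eq_bigr => k hk; rewrite /y /lshift_pt (negbTE hk).
      rewrite ltn_add2r /y /lshift_pt eqxx /t; move: hj; case: ifP; move: (z j) => w h0 hj; lia.
    lia.
  - move: hz; rewrite /inD /y /lshift_pt /=.
    case: (eqVneq i j) => [eij|//]; rewrite /t -eij => hz0.
    move: hj; rewrite -eij; move: hc hz0; case: (boolP b) => _; case: ifP; move: (z i) => w h0 hc hz0 hj; lia.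
  - by rewrite /y /t; case: ifP => _.
have hux : u x != 0.
  by apply/eqP => h; exact: (strong (nrm x).+1 x (ltnSn _) hx h).
have hrx : refl i c b x = lshift_pt x i (sgnb b).
  by apply: funext => k; rewrite /refl /lshift_pt; case: eqP => [->|//]; rewrite hxc; lia.
rewrite (bigD1 i) //=.
have s0 : 0 <= \sum_(j < d | j != i) (`|G0 x - G0 (lshift_pt x j 1)| + `|G0 x - G0 (lshift_pt x j (-1))|).
  by apply: sumr_ge0 => j _; apply: addr_ge0.
have t0 : 0 < `|u x| by rewrite normr_gt0.
move: t0; rewrite /u hrx.
have [->|->] : sgnb b = 1 \/ sgnb b = -1 by rewrite /sgnb; case: ifP; [left|right].
- have := normr_ge0 (G0 x - G0 (lshift_pt x i (-1))); lra.
- have := normr_ge0 (G0 x - G0 (lshift_pt x i 1)); lra.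
Qed.
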